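(* Complete semantics is serialisable with the selection function $\alpha_{adm}(X,Y,Z)=X\cup Y\cup Z$ and the termination function $\beta_{co}(F,S)=1$ if $\mathrm{IS}^u(F)=\emptyset$ and $\beta_{co}(F,S)=0$ otherwise.
   Context: An abstract argumentation framework (AF) is a pair $F=(A,R)$ with $A$ a finite subset of a fixed universal set of arguments $\mathfrak{A}$ and $R\subseteq A\times A$ ($a\to b$ means $(a,b)\in R$). For $S\subseteq A$: $S^+=\{a\mid \exists b\in S: b\to a\}$, $S^-=\{a\mid\exists b\in S: a\to b\}$; for sets $S,S'$, $S\to S'$ means $S^+\cap S'\neq\emptyset$. $S$ is conflict-free if no $a,b\in S$ with $a\to b$; $S$ defends $b$ if every attacker of $b$ is attacked by some element of $S$; $S$ is admissible if conflict-free and defends all its elements. A complete extension is an admissible set $E$ containing every argument it defends. An initial set is a non-empty admissible set with no non-empty admissible proper subset; $\mathrm{IS}(F)$ is the set of initial sets. An initial set $S$ is unattacked if $S^-=\emptyset$; unchallenged if $S^-\neq\emptyset$ and no $S'\in\mathrm{IS}(F)$ has $S'\to S$; challenged if some $S'\in\mathrm{IS}(F)$ has $S'\to S$. Write $\mathrm{IS}^{u}(F),\mathrm{IS}^{uc}(F),\mathrm{IS}^{c}(F)$ for these sets. The reduct is $F^S=(A',R\cap(A'\times A'))$ with $A'=A\setminus(S\cup S^+)$. A selection function $\alpha$ maps any three sets $X,Y,Z$ of sets of arguments to a subset of $X\cup Y\cup Z$; a termination function $\beta$ maps pairs $(F,S)$ to $\{0,1\}$. Transitions: $(F,S)\to(F^{S'},S\cup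 S')$ whenever $S'\in\alpha(\mathrm{IS}^u(F),\mathrm{IS}^{uc}(F),\mathrm{IS}^c(F))$. $(F,S)\leadsto^{\alpha,\beta}(F',S')$ means $(F',S')$ is reachable from $(F,S)$ in finitely many (possibly zero) transitions and $\beta(F',S')=1$. $\mathcal{E}^{\alpha,\beta}(F)$ is the set of all $S$ with $(F,\emptyset)\leadsto^{\alpha,\beta}(F',S)$ for some $F'$. A semantics $\sigma$ is serialisable with $\alpha,\beta$ if $\sigma(F)=\mathcal{E}^{\alpha,\beta}(F)$ for all AFs $F$. *)

(* Defs.v *)
From HB Require Import structures.
From mathcomp Require Import all_boot.
From mathcomp Require Import finmap.
Set Implicit Arguments. Unset Strict Implicit. Unset Printing Implicit Defensive.
Local Open Scope fset_scope.

Section AF.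
Variable T : choiceType.

Record AF := MkAF {
  args : {fset T};
  att : {fset T * T};
  att_wf : att `<=` args `*` args }.

Definition attacks (F : AF) (a b : T) : bool := (a, b) \in att F.

Definition set_attacks_arg (F : AF) (S : {fset T}) (b : T) : bool :=
  has (fun a => attacks F a b) S.

Definition set_attacks (F : AF) (S S' : {fset T}) : Prop :=
  exists a b, a \in S /\ b \in S' /\ attacks F a b.

Definition conflict_free (F : AF) (S : {fset T}) : Prop :=
  forall a b, a \in S -> b \in S -> ~~ attacks F a b.

Definition defends (F : AF) (S : {fset T}) (b : T) : Prop :=
  forall a, attacks F a b -> exists2 c, c \in S & attacks F c a.

Definition admissible (F : AF) (S : {fset T}) : Prop :=
  [/\ S `<=` args F, conflict_free F S & forall b, b \in S -> defends F S b].

Definition complete (F : AF) (E : {fset T}) : Prop :=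
  admissible F E /\ forall b, b \in args F -> defends F E b -> b \in E.

Definition initial (F : AF) (S : {fset T}) : Prop :=
  [/\ admissible F S, S != fset0 &
      forall S', S' `<` S -> S' != fset0 -> ~ admissible F S'].

Definition unattacked_set (F : AF) (S : {fset T}) : Prop :=
  forall a b, b \in S -> ~~ attacks F a b.

Definition IS_u (F : AF) (S : {fset T}) : Prop :=
  initial F S /\ unattacked_set F S.
Definition IS_uc (F : AF) (S : {fset T}) : Prop :=
  [/\ initial F S, ~ unattacked_set F S &
      ~ exists S', initial F S' /\ set_attacks F S' S].
Definition IS_c (F : AF) (S : {fset T}) : Prop :=
  initial F S /\ exists S', initial F S' /\ set_attacks F S' S.

Definition reduct_args (F : AF) (S : {fset T}) : {fset T} :=
  [fset b in args F | (b \notin S) && ~~ set_attacks_arg F S b].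

Lemma reduct_att_wf (F : AF) (S : {fset T}) :
  [fset p in att F | (p.1 \in reduct_args F S) && (p.2 \in reduct_args F S)]
    `<=` reduct_args F S `*` reduct_args F S.
Proof.
apply/fsubsetP => p; rewrite !inE => /andP [_ /andP [H1 H2]].
by rewrite H1 H2.
Qed.

Definition reduct (F : AF) (S : {fset T}) : AF :=
  MkAF (reduct_att_wf F S).

Definition setsys := {fset T} -> Prop.
Definition selection := setsys -> setsys -> setsys -> setsys.
Definition selection_ok (alpha : selection) : Prop :=
  forall X Y Z S, alpha X Y Z S -> X S \/ Y S \/ Z S.
(* termination function: beta F S holds iff beta(F,S) = 1 *)
Definition termination := AF -> {fset T} -> Prop.

Definition step (alpha : selection) (c c' : AF * {fset T}) : Prop :=
  exists2 S', alpha (IS_u c.1) (IS_uc c.1) (IS_c c.1) S' &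
    c' = (reduct c.1 S', c.2 `|` S').

Inductive reach (alpha : selection) : AF * {fset T} -> AF * {fset T} -> Prop :=
| reach_refl c : reach alpha c c
| reach_step c c' c'' : step alpha c c' -> reach alpha c' c'' -> reach alpha c c''.

Definition leadsto (alpha : selection) (beta : termination)
  (c c' : AF * {fset T}) : Prop :=
  reach alpha c c' /\ beta c'.1 c'.2.

Definition serial_ext (alpha : selection) (beta : termination) (F : AF)
  (S : {fset T}) : Prop :=
  exists F', leadsto alpha beta (F, fset0) (F', S).

Definition serialisable (sigma : AF -> {fset T} -> Prop)
  (alpha : selection) (beta : termination) : Prop :=
  forall F S, sigma F S <-> serial_ext alpha beta F S.

Definition alpha_adm : selection := fun X Y Z S => X S \/ Y S \/ Z S.

Definition beta_co : termination := fun F _ => ~ exists S, IS_u F S.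

End AF.

(* Main.v *)
Require Import Defs.
From HB Require Import structures.
From mathcomp Require Import all_boot.
From mathcomp Require Import finmap.
From Stdlib Require Import Classical.
Set Implicit Arguments. Unset Strict Implicit. Unset Printing Implicit Defensive.

Section Proofs.
Local Open Scope fset_scope.
Variable T : choiceType.
Implicit Types (F : AF T) (S E A : {fset T}).

Lemma AF_ext F1 F2 : args F1 = args F2 -> att F1 = att F2 -> F1 = F2.
Proof.
case: F1 => a1 r1 w1; case: F2 => a2 r2 w2 /= ea er; subst.
by rewrite (bool_irrelevance w1 w2).
Qed.

Lemma attP F a b : attacks F a b -> a \in args F /\ b \in args F.
Proof.
rewrite /attacks => H.
have /fsubsetP/(_ _ H) := att_wf F.
by rewrite !inE /= => /andP.
Qed.

Lemma saaP F S b : reflect (exists2 a, a \in S & attacks F a b) (set_attacks_arg F S b).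
Proof. exact: hasP. Qed.

Lemma mem_red F S b : (b \in reduct_args F S) = [&& b \in args F, b \notin S & ~~ set_attacks_arg F S b].
Proof. by rewrite /reduct_args !inE. Qed.

Lemma att_red F S a b : attacks (reduct F S) a b = [&& attacks F a b, a \in reduct_args F S & b \in reduct_args F S].
Proof. by rewrite /attacks /= !inE. Qed.

Lemma mem_sep (U : choiceType) (A : {fset U}) (P : pred U) p :
  (p \in [fset q in A | P q]) = (p \in A) && P p.
Proof. by rewrite inE. Qed.

Lemma reduct0 F : reduct F fset0 = F.
Proof.
have ea : reduct_args F fset0 = args F.
  apply/fsetP => b; rewrite mem_red in_fset0 /=.
  case: (saaP F fset0 b) => [[a]|]; rewrite ?in_fset0 // andbT //.
apply: AF_ext; first exact: ea. rewrite /=.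
apply/fsetP => -[x y]; rewrite ea !inE /=.
case H: ((x, y) \in att F) => //=.
by have [-> ->] := attP (a:=x) (b:=y) H.
Qed.

Lemma reductU F S S' : S' `<=` reduct_args F S ->
  reduct (reduct F S) S' = reduct F (S `|` S').
Proof.
move=> sub.
have ea : reduct_args (reduct F S) S' = reduct_args F (S `|` S').
  apply/fsetP => b; rewrite !mem_red /= !inE negb_or.
  apply/idP/idP.
  - case/and3P => /and3P[bA bS nSb] bS' nS'b.
    rewrite bA bS bS' /=; apply/negP => /saaP [a]; rewrite inE => /orP[aS|aS'] ab.
    + by move/negP: nSb; apply; apply/saaP; exists a.
    + move/negP: nS'b; apply; apply/saaP; exists a => //.
      by rewrite att_red ab (fsubsetP sub _ aS') mem_red bA bS nSb.
  - case/and3P => bA /andP[bS bS'] nb.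
    have nSb : ~~ set_attacks_arg F S b.
      apply/negP => /saaP [a aS ab]; move/negP: nb; apply; apply/saaP; exists a => //.
      by rewrite inE aS.
    rewrite bA bS nSb bS' /=; apply/negP => /saaP [a aS']; rewrite att_red => /and3P[ab _ _].
    move/negP: nb; apply; apply/saaP; exists a => //; by rewrite inE aS' orbT.
apply: AF_ext; first exact: ea. rewrite /=.
apply/fsetP => -[x y]; rewrite /= -ea !mem_sep /=.
by case: ((x, y) \in att F); case: (x \in args F); case: (y \in args F);
  case: (x \in S); case: (y \in S); case: (set_attacks_arg F S x);
  case: (set_attacks_arg F S y); case: (x \in S'); case: (y \in S');
  case: (set_attacks_arg (reduct F S) S' x); case: (set_attacks_arg (reduct F S) S' y).
Qed.

Lemma adm_union F S S' : admissible F S -> admissible (reduct F S) S' ->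
  admissible F (S `|` S').
Proof.
case=> sub cf def [sub' cf' def'].
have inR b : b \in S' -> b \in reduct_args F S by move=> /(fsubsetP sub').
split.
- apply/fsubsetP => b; rewrite inE => /orP[/(fsubsetP sub)//|/inR].
  by rewrite mem_red => /and3P[].
- move=> a b; rewrite !inE => /orP[aS|aS'] /orP[bS|bS'].
  + exact: cf.
  + apply/negP => ab; move: (inR _ bS'); rewrite mem_red => /and3P[_ _ /negP]; apply.
    by apply/saaP; exists a.
  + apply/negP => ab; have [c cS ca] := def _ bS _ ab.
    move: (inR _ aS'); rewrite mem_red => /and3P[_ _ /negP]; apply.
    by apply/saaP; exists c.
  + apply/negP => ab; have := cf' _ _ aS' bS'.
    by rewrite att_red ab (inR _ aS') (inR _ bS').
- move=> b; rewrite inE => /orP[bS|bS'] a ab.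
  + have [c cS ca] := def _ bS _ ab; exists c => //; by rewrite inE cS.
  + have bR := inR _ bS'.
    case: (saaP F S a) => [[c cS ca]|nSa]; first by exists c; rewrite ?inE ?cS.
    have aR : a \in reduct_args F S.
      rewrite mem_red (proj1 (attP ab)) /=; apply/andP; split.
      * apply/negP => aS; move: bR; rewrite mem_red => /and3P[_ _ /negP]; apply.
        by apply/saaP; exists a.
      * by apply/negP => /saaP.
    have aRb : attacks (reduct F S) a b by rewrite att_red ab aR bR.
    have [c cS' ca] := def' _ bS' _ aRb.
    exists c; first by rewrite inE cS' orbT.
    by move: ca; rewrite att_red => /and3P[].
Qed.

Lemma final_complete F S : admissible F S -> ~ (exists U, IS_u (reduct F S) U) ->
  complete F S.
Proof.
move=> adS nU; split=> // b bA db.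
case: adS => sub cf def.
apply/negPn/negP => bS; apply: nU; exists [fset b].
have nSb : ~~ set_attacks_arg F S b.
  apply/negP => /saaP [s sS sb]; have [c cS cs] := db _ sb.
  by move: (cf _ _ cS sS); rewrite cs.
have bR : b \in reduct_args F S by rewrite mem_red bA bS nSb.
have unatt : unattacked_set (reduct F S) [fset b].
  move=> a b'; rewrite inE => /eqP ->; rewrite att_red; apply/negP => /and3P[ab aR _].
  have [c cS ca] := db _ ab.
  move: aR; rewrite mem_red => /and3P[_ _ /negP]; apply; apply/saaP; by exists c.
split=> //; split.
- split.
  + by apply/fsubsetP => x; rewrite inE => /eqP ->.
  + by move=> x y _ yb; apply: unatt.
  + move=> x xb a ax; exfalso; by move: (unatt a x xb); rewrite ax.
- by apply/eqP => /fsetP/(_ b); rewrite !inE eqxx.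
- move=> S' lt ne _.
  have [x xS'] := fset0Pn _ ne.
  have xb : x = b by move: (fsubsetP (fproper_sub lt) _ xS'); rewrite inE => /eqP.
  have : [fset b] `<=` S' by apply/fsubsetP => y; rewrite inE => /eqP ->; rewrite -xb.
  by rewrite fproperE in lt; case/andP: lt => _ /negP.
Qed.

Lemma complete_final F E : complete F E -> ~ exists U, IS_u (reduct F E) U.
Proof.
case=> [[sub cf def] cmp] [U [[[subU cfU defU] neU _] unU]].
have [u uU] := fset0Pn _ neU.
have uR : u \in reduct_args F E := fsubsetP subU u uU.
move: (uR); rewrite mem_red => /and3P[uA uE nEu].
move/negP: uE; apply; apply: cmp uA _ => a au.
case: (saaP F E a) => [[c cE ca]|nEa]; first by exists c.
exfalso; have aA := proj1 (attP au).
case aE: (a \in E).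
- by move/negP: nEu; apply; apply/saaP; exists a.
- have aR : a \in reduct_args F E.
    by rewrite mem_red aA aE /=; apply/negP => /saaP.
  by move: (unU a u uU); rewrite att_red au aR uR.
Qed.

Lemma adm_diff F E S : admissible F E -> S `<=` E -> admissible (reduct F S) (E `\` S).
Proof.
case=> sub cf def sSE.
have inR b : b \in E `\` S -> b \in reduct_args F S.
  rewrite inE => /andP[bS bE]; rewrite mem_red (fsubsetP sub _ bE) bS /=.
  apply/negP => /saaP [a aS ab].
  by move: (cf _ _ (fsubsetP sSE _ aS) bE); rewrite ab.
split.
- by apply/fsubsetP => b /inR.
- move=> a b aD bD; rewrite att_red; apply/negP => /and3P[ab _ _].
  move: aD bD; rewrite !inE => /andP[_ aE] /andP[_ bE].
  by move: (cf _ _ aE bE); rewrite ab.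
- move=> b bD a; rewrite att_red => /and3P[ab aR bR].
  have bE : b \in E by move: bD; rewrite inE => /andP[].
  have [c cE ca] := def _ bE _ ab.
  case cS: (c \in S).
  + move: aR; rewrite mem_red => /and3P[_ _ /negP[]]; apply/saaP; by exists c.
  + have cD : c \in E `\` S by rewrite inE cS cE.
    by exists c => //; rewrite att_red ca aR inR.
Qed.

Lemma exists_initial F n : forall A, #|`A| <= n -> admissible F A -> A != fset0 ->
  exists2 S, initial F S & S `<=` A.
Proof.
elim: n => [|n IH] A hA adA neA.
- by move: neA; rewrite -cardfs_eq0; rewrite leqn0 in hA; rewrite hA.
- case: (classic (initial F A)) => [iA|niA]; first by exists A.
  have [S' [lt ne adm]] : exists S', [/\ S' `<` A, S' != fset0 & admissible F S'].
    apply: NNPP => H; apply: niA; split=> // S' lt ne adm; apply: H; by exists S'.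
  have hS' : #|`S'| <= n.
    by have h := fproper_ltn_card lt; rewrite -ltnS; exact: leq_trans h hA.
  have [S0 i0 s0] := IH S' hS' adm ne.
  by exists S0 => //; apply: fsubset_trans s0 (fproper_sub lt).
Qed.

Lemma initial_alpha F S : initial F S -> alpha_adm (IS_u F) (IS_uc F) (IS_c F) S.
Proof.
move=> iS; case: (classic (unattacked_set F S)) => u; first by left.
case: (classic (exists S', initial F S' /\ set_attacks F S' S)) => c.
- by right; right.
- by right; left.
Qed.

Lemma adm0 F : admissible F fset0.
Proof. by split; [exact: fsub0set | move=> a b; rewrite in_fset0 | move=> b; rewrite in_fset0]. Qed.

Lemma sound_reach F c c' : reach (@alpha_adm T) c c' ->
  forall S, c = (reduct F S, S) -> admissible F S ->
  c'.1 = reduct F c'.2 /\ admissible F c'.2.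
Proof.
elim=> [c0|c0 c1 c2 [S' al ->] _ IH] S e adS; first by rewrite e.
subst c0; rewrite /= in al *.
have iS' : initial (reduct F S) S' by case: al => [[]|[[]|[]]].
case: iS' => adS' _ _.
apply: (IH (S `|` S')).
- by rewrite reductU //; case: adS'.
- exact: adm_union.
Qed.

Lemma compl_reach F E n : complete F E -> forall S, #|`E `\` S| <= n -> S `<=` E ->
  admissible F S -> reach (@alpha_adm T) (reduct F S, S) (reduct F E, E).
Proof.
move=> cE; elim: n => [|n IH] S hn sSE adS.
- have e0 : E `\` S == fset0 by rewrite -cardfs_eq0 -leqn0.
  have -> : S = E by apply/eqP; rewrite eqEfsubset sSE -fsetD_eq0 e0.
  exact: reach_refl.
- case: (eqVneq (E `\` S) fset0) => [e0|ne].
  + have -> : S = E by apply/eqP; rewrite eqEfsubset sSE -fsetD_eq0 e0.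
    exact: reach_refl.
  + have adD := adm_diff (proj1 cE) sSE.
    have [S' iS' sub] := exists_initial (leqnn _) adD ne.
    have sR : S' `<=` reduct_args F S.
      by case: iS' => -[+ _ _] _ _; move=> h; apply: fsubset_trans h (fsubset_refl _).
    apply: reach_step; first by exists S'; [exact: initial_alpha | reflexivity].
    rewrite /= reductU //.
    have sUE : S `|` S' `<=` E.
      by rewrite fsubUset sSE /=; apply: fsubset_trans sub (fsubsetDl _ _).
    apply: IH => //.
    * have lt : E `\` (S `|` S') `<` E `\` S.
        apply: fsetDpS => //; apply: fproperUl; apply/negP => sS'S.
        case: iS' => _ neS' _; have [x xS'] := fset0Pn _ neS'.
        move: (fsubsetP sub _ xS'); rewrite inE (fsubsetP sS'S _ xS') //.
      by have h := fproper_ltn_card lt; rewrite -ltnS; exact: leq_trans h hn.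
    * apply: adm_union => //; by case: iS'.
Qed.

End Proofs.

Theorem theorem3 (T : choiceType) :
  serialisable (@complete T) (@alpha_adm T) (@beta_co T).
Proof.
move=> F S; split.
- move=> cS; exists (reduct F S); split; last exact: complete_final.
  rewrite -{1}(reduct0 F); apply: (compl_reach cS (leqnn _)) => //.
- case=> F' [r b].
  have [/= e ad] := sound_reach r (esym (f_equal (fun G => (G, fset0)) (reduct0 F))) (adm0 F).
  rewrite e in b; exact: final_complete.
Qed.
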